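(* Let $M$ be a smooth manifold and $g_1,g_2$ Riemannian metrics on $M$. For $p\in M$ write $\|\cdot\|_i^{(p)}$ for the norm on $T_pM$ induced by $(g_i)_p$. The following are equivalent: (1) $g_1$ and $g_2$ are roughly conformal, i.e. there is a function (not necessarily continuous) $h:M\to(0,\infty)$ with $(g_2)_p=h(p)(g_1)_p$ for every $p\in M$; (2) there is a function (not necessarily continuous) $f:M\to(0,\infty)$ such that $\|\cdot\|_1^{(p)}=f(p)\|\cdot\|_2^{(p)}$ on $T_pM$ for each $p\in M$; (3) for each $p\in M$, $(g_1)_p$ and $(g_2)_p$ give the same angle between every pair of nonzero vectors in $T_pM$; (4) for each $p\in M$ and all nonzero $v,w\in T_pM$, $(g_1)_p(v,w)=0\iff(g_2)_p(v,w)=0$; (5) for each $p\in M$ there is $\theta_0\in(0,\pi)$ such that for all nonzero $v,w\in T_pM$, the angle between $v,w$ with respect to $(g_1)_p$ is $\theta_0$ iff the angle between them with respect to $(g_2)_p$ is $\theta_0$.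
   Context: For an inner product $g$ on a real vector space, the angle between nonzero vectors $v,w$ is the unique $\theta\in[0,\pi]$ with $\cos\theta=g(v,w)/(\sqrt{g(v,v)}\sqrt{g(w,w)})$. *)

(* Defs.v *)
From HB Require Import structures.
From mathcomp Require Import all_boot all_order all_algebra.
From mathcomp Require Import all_classical all_reals all_analysis.
Set Implicit Arguments. Unset Strict Implicit. Unset Printing Implicit Defensive.
Import Order.TTheory GRing.Theory Num.Theory.
Local Open Scope ring_scope.

Definition is_inner_prod (R : realType) (V : vectType R) (g : V -> V -> R) : Prop :=
  [/\ (forall v w, g v w = g w v),
      (forall a u v w, g (a *: u + v) w = a * g u w + g v w)
    & (forall v, v != 0 -> 0 < g v v)].

Definition ip_norm (R : realType) (V : vectType R) (g : V -> V -> R) (v : V) : R :=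
  Num.sqrt (g v v).

Definition ip_angle (R : realType) (V : vectType R) (g : V -> V -> R) (v w : V) : R :=
  acos (g v w / (Num.sqrt (g v v) * Num.sqrt (g w w))).

(* Main.v *)
Require Import Defs.
From HB Require Import structures.
From mathcomp Require Import all_boot all_order all_algebra.
From mathcomp Require Import all_classical all_reals all_analysis.
From mathcomp Require Import ring lra.
Import Order.TTheory GRing.Theory Num.Theory.
Local Open Scope ring_scope.

Section IP.
Variables (R : realType) (V : vectType R) (g : V -> V -> R).
Hypothesis hg : is_inner_prod g.

Lemma gsym v w : g v w = g w v. Proof. by case: (hg). Qed.
Lemma glin a u v w : g (a *: u + v) w = a * g u w + g v w. Proof. by case: (hg). Qed.
Lemma gpos v : v != 0 -> 0 < g v v. Proof. case: (hg) => _ _ H; exact: H. Qed.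
Lemma g0l w : g 0 w = 0.
Proof. have := glin 1 0 0 w; rewrite scaler0 addr0 mul1r => H; lra. Qed.

Lemma gDl u v w : g (u + v) w = g u w + g v w.
Proof. by rewrite -[u]scale1r glin mul1r scale1r. Qed.
Lemma gZl a u w : g (a *: u) w = a * g u w.
Proof. by rewrite -[a *: u]addr0 glin g0l addr0. Qed.
Lemma g0r w : g w 0 = 0. Proof. by rewrite gsym g0l. Qed.
Lemma gDr u v w : g w (u + v) = g w u + g w v.
Proof. by rewrite gsym gDl gsym (gsym v). Qed.
Lemma gZr a u w : g w (a *: u) = a * g w u.
Proof. by rewrite gsym gZl gsym. Qed.
Lemma gNl u w : g (- u) w = - g u w.
Proof. by rewrite -scaleN1r gZl mulN1r. Qed.
Lemma gNr u w : g w (- u) = - g w u.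
Proof. by rewrite gsym gNl gsym. Qed.
Lemma gge0 v : 0 <= g v v.
Proof. case: (eqVneq v 0) => [->|/gpos/ltW //]; by rewrite g0l. Qed.

Lemma CS v w : g v w ^+ 2 <= g v v * g w w.
Proof.
case: (eqVneq v 0) => [->|nz]; first by rewrite g0l expr0n /=; exact: mulr_ge0 (gge0 _) (gge0 _).
have p := @gpos v nz.
set t := g v w / g v v.
have := gge0 (w - t *: v).
rewrite gDl gDr gDr gNl gNr gNl gNr !gZl !gZr (gsym w v).
rewrite /t => H.
have e : g v w / g v v * g v v = g v w by rewrite divfK // gt_eqF.
nra.
Qed.
Definition rt v w := g v w / (Num.sqrt (g v v) * Num.sqrt (g w w)).

Lemma sq_pos {v : V} : v != 0 -> 0 < Num.sqrt (g v v).
Proof. by move=> nz; rewrite sqrtr_gt0 (@gpos v nz). Qed.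

Lemma rt_bound v w : v != 0 -> w != 0 -> -1 <= rt v w <= 1.
Proof.
move=> nv nw; have pv := sq_pos nv; have pw := sq_pos nw.
have sv := sqr_sqrtr (gge0 v); have sw := sqr_sqrtr (gge0 w).
have cs := CS v w.
set s := Num.sqrt (g v v) * Num.sqrt (g w w).
have sp : 0 < s by rewrite mulr_gt0.
have e : rt v w * s = g v w by rewrite /rt divfK // gt_eqF.
have s2 : s ^+ 2 = g v v * g w w by rewrite /s exprMn sv sw.
set x := rt v w.
have x2 : x ^+ 2 <= 1.
  have : (x * s) ^+ 2 <= s ^+ 2 by rewrite e s2.
  rewrite exprMn -[X in _ <= X]mul1r ler_pM2r //; exact: exprn_gt0.
apply/andP; split; nra.
Qed.

Lemma rt0 v w : v != 0 -> w != 0 -> (rt v w = 0 <-> g v w = 0).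
Proof.
move=> nv nw; rewrite /rt; split; last by move=> ->; rewrite mul0r.
move/eqP; rewrite mulf_eq0 invr_eq0 mulf_eq0 (gt_eqF (sq_pos nv)) (gt_eqF (sq_pos nw)) /= orbF; by move/eqP.

Qed.

Lemma angle_eq v w t : v != 0 -> w != 0 -> 0 <= t <= pi ->
  (ip_angle g v w = t <-> rt v w = cos t).
Proof.
move=> nv nw ht; rewrite /ip_angle -/(rt v w); split.
  move=> <-; rewrite acosK //; rewrite in_itv /=; exact: rt_bound.
by move=> ->; rewrite cosK // in_itv /=.
Qed.
End IP.
Arguments gsym {R V g}.
Arguments glin {R V g}.
Arguments g0l {R V g}.
Arguments gDl {R V g}.
Arguments gZl {R V g}.
Arguments g0r {R V g}.
Arguments gDr {R V g}.
Arguments gZr {R V g}.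
Arguments gNl {R V g}.
Arguments gNr {R V g}.
Arguments gge0 {R V g}.
Arguments CS {R V g}.
Arguments rt_bound {R V g} hg {v w}.
Arguments rt0 {R V g} hg {v w}.
Arguments angle_eq {R V g} hg {v w t}.
Arguments gpos {R V g} hg {v}.
Arguments sq_pos {R V g} hg {v}.
Arguments rt {R V} g v w.
Section Two.
Variables (R : realType) (V : vectType R) (g1 g2 : V -> V -> R).
Hypotheses (hg1 : is_inner_prod g1) (hg2 : is_inner_prod g2).

Definition PA := exists h : R, 0 < h /\ forall v w : V, g2 v w = h * g1 v w.
Definition PB := exists f : R, 0 < f /\ forall v : V, ip_norm g1 v = f * ip_norm g2 v.
Definition PC := forall v w : V, v != 0 -> w != 0 -> ip_angle g1 v w = ip_angle g2 v w.
Definition PD := forall v w : V, v != 0 -> w != 0 -> (g1 v w = 0 <-> g2 v w = 0).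
Definition PE := exists theta0 : R, 0 < theta0 < pi /\
              forall v w : V, v != 0 -> w != 0 ->
                (ip_angle g1 v w = theta0 <-> ip_angle g2 v w = theta0).

Lemma AB : PA -> PB.
Proof.
move=> [h [hp H]]; exists (Num.sqrt h)^-1; split; first by rewrite invr_gt0 sqrtr_gt0.
move=> v; rewrite /ip_norm H sqrtrM ?ltW // mulrA mulVf ?mul1r //.
by rewrite gt_eqF // sqrtr_gt0.
Qed.

Lemma BA : PB -> PA.
Proof.
move=> [f [fp H]].
have Q v : g1 v v = f ^+ 2 * g2 v v.
  have := H v; rewrite /ip_norm => e.
  by rewrite -(sqr_sqrtr (gge0 hg1 v)) e exprMn sqr_sqrtr // gge0.
exists (f ^+ 2)^-1; split; first by rewrite invr_gt0 exprn_gt0.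
move=> v w; have := Q (v + w).
rewrite !(gDl hg1, gDr hg1, gDl hg2, gDr hg2) Q (Q w) (gsym hg1 w v) (gsym hg2 w v).
have fn : f ^+ 2 != 0 by rewrite gt_eqF // exprn_gt0.
move=> e; apply: (mulfI fn); rewrite mulrA divff // mul1r.
lra.
Qed.

Lemma AC : PA -> PC.
Proof.
move=> [h [hp H]] v w nv nw; rewrite /ip_angle !H !sqrtrM ?ltW //; congr acos.
rewrite [in h * _]( _ : h = Num.sqrt h ^+ 2); last by rewrite sqr_sqrtr // ltW.
have := sq_pos hg1 nv; have := sq_pos hg1 nw.
have : 0 < Num.sqrt h by rewrite sqrtr_gt0.
move: (Num.sqrt h) (Num.sqrt (g1 v v)) (Num.sqrt (g1 w w)) => a b c ha hc hb.
field; rewrite ?gt_eqF ?mulr_gt0 //.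
Qed.

Lemma CD : PC -> PD.
Proof.
have hpi : 0 <= @pi R / 2 <= @pi R.
  have p := @pi_gt0 R. apply/andP; split; lra.
move=> HC v w nv nw; split => e.
  apply/(rt0 hg2 nv nw); rewrite -cos_pihalf; apply/(angle_eq hg2 nv nw hpi).
  rewrite -HC //; apply/(angle_eq hg1 nv nw hpi); rewrite cos_pihalf.
  exact/(rt0 hg1 nv nw).
apply/(rt0 hg1 nv nw); rewrite -cos_pihalf; apply/(angle_eq hg1 nv nw hpi).
rewrite HC //; apply/(angle_eq hg2 nv nw hpi); rewrite cos_pihalf.
exact/(rt0 hg2 nv nw).
Qed.

Lemma DA : PD -> PA.
Proof.
move=> HD.
pose l u := g2 u u / g1 u u.
have S1 u w : u != 0 -> g2 u w = l u * g1 u w.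
  move=> nu; have p1 := gpos hg1 nu.
  set c := g1 u w / g1 u u.
  have e1 : g1 u (w - c *: u) = 0.
    by rewrite (gDr hg1) (gNr hg1) (gZr hg1) /c divfK ?gt_eqF // subrr.
  have e2 : g2 u (w - c *: u) = 0.
    case: (eqVneq (w - c *: u) 0) => [->|nz]; first by rewrite (g0r hg2).
    by apply/(HD _ _ nu nz).
  move: e2; rewrite (gDr hg2) (gNr hg2) (gZr hg2) /l /c => e2.
  have -> : g2 u w = g1 u w / g1 u u * g2 u u by lra.
  by field; rewrite gt_eqF.
have S2 u u' : u != 0 -> u' != 0 -> g1 u u' != 0 -> l u = l u'.
  move=> nu nu' nz; have := S1 u u' nu; have := S1 u' u nu'.
  rewrite (gsym hg2 u' u) (gsym hg1 u' u) => e1 e2.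
  by apply: (mulIf nz); rewrite -e1 -e2.
have S3 u u' : u != 0 -> u' != 0 -> l u = l u'.
  move=> nu nu'; case: (eqVneq (g1 u u') 0) => [z|nz]; last exact: S2.
  have ns : u + u' != 0.
    apply/eqP => s0; have e : u' = - u by rewrite -(addKr u u') s0 addr0.
    move: z; rewrite e (gNr hg1) => /eqP; rewrite oppr_eq0 gt_eqF //.
    by have := gpos hg1 nu.
  rewrite (S2 u (u + u')) ?(S2 u' (u + u')) //.
    rewrite (gDr hg1) (gsym hg1 u' u) z add0r gt_eqF //; by have := gpos hg1 nu'.
  rewrite (gDr hg1) z addr0 gt_eqF //; by have := gpos hg1 nu.
case: (pselect (exists u : V, u != 0)) => [[u0 nu0]|none].
  exists (l u0); split; first by rewrite divr_gt0 // ?(gpos hg2 nu0) ?(gpos hg1 nu0).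
  move=> v w; case: (eqVneq v 0) => [->|nv]; first by rewrite (g0l hg1) (g0l hg2) mulr0.
  by rewrite S1 // (S3 v u0).
exists 1; split => // v w.
have -> : v = 0 by apply/eqP; apply/negPn/negP => nv; apply: none; exists v.
by rewrite (g0l hg1) (g0l hg2) mulr0.
Qed.

Lemma AE : PA -> PE.
Proof.
move=> HA; exists (pi / 2); split.
  have p := @pi_gt0 R; apply/andP; split; lra.
by move=> v w nv nw; rewrite (AC HA v w nv nw).
Qed.

Lemma eq_by_diff (x y d : R) : x - y = d -> d = 0 -> x = y.
Proof. by move=> <- /eqP; rewrite subr_eq0 => /eqP. Qed.

Lemma ED_half (t : R) : 0 < t < pi ->
  (forall v w : V, v != 0 -> w != 0 -> ip_angle g1 v w = t -> ip_angle g2 v w = t) ->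
  forall u w : V, u != 0 -> w != 0 -> g1 u w = 0 -> g2 u w = 0.
Proof.
move=> hat H u w nu nw z.
have ht : 0 <= t <= pi by case/andP: hat => h1 h2; rewrite ltW // ltW.
set a := cos t.
have ea : acos a = t by rewrite cosK // in_itv /=.
have a1 : a != 1 by apply/eqP => e; move: ea; rewrite e acos1 => e0; move: hat; rewrite -e0 ltxx.
have a2 : a != -1 by apply/eqP => e; move: ea; rewrite e acosN1 => e0; move: hat; rewrite e0 ltxx andbF.
have ha : -1 < a < 1.
  by rewrite !lt_neqAle a1 cos_le1 cos_geN1 eq_sym a2.
have ha2 : 0 < 1 - a ^+ 2 by case/andP: ha => h1 h2; nra.
set b := Num.sqrt (1 - a ^+ 2).
have b2 : b ^+ 2 = 1 - a ^+ 2 by rewrite sqr_sqrtr // ltW.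
have bp : 0 < b by rewrite sqrtr_gt0.
set p := Num.sqrt (g1 u u).
set q := Num.sqrt (g1 w w).
have pp : 0 < p := sq_pos hg1 nu.
have qp : 0 < q := sq_pos hg1 nw.
have p2 : p ^+ 2 = g1 u u by rewrite sqr_sqrtr // gge0.
have q2 : q ^+ 2 = g1 w w by rewrite sqr_sqrtr // gge0.
have claim tt : tt ^+ 2 = b ^+ 2 * p ^+ 2 ->
  (a * q * g2 u u + tt * g2 u w) ^+ 2 =
   a ^+ 2 * g2 u u * (a ^+ 2 * q ^+ 2 * g2 u u + 2 * a * q * tt * g2 u w + tt ^+ 2 * g2 w w).
  move=> htt.
  set x := (a * q) *: u + tt *: w.
  have gux1 : g1 u x = a * q * p ^+ 2.
    by rewrite /x (gDr hg1) !(gZr hg1) z mulr0 addr0 p2.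
  have gxx1 : g1 x x = (p * q) ^+ 2.
    rewrite /x !(gDl hg1, gDr hg1, gZl hg1, gZr hg1) (gsym hg1 w u) z -p2 -q2.
    apply: (@eq_by_diff _ _ (q ^+ 2 * (tt ^+ 2 - b ^+ 2 * p ^+ 2) + p ^+ 2 * q ^+ 2 * (b ^+ 2 - (1 - a ^+ 2)))).
      by ring.
    by rewrite htt b2 !subrr !mulr0 addr0.
  have xnz : x != 0.
    apply/eqP => x0; move: gxx1; rewrite x0 (g0l hg1) => /eqP.
    by rewrite eq_sym sqrf_eq0 mulf_eq0 !gt_eqF.
  have r1 : rt g1 u x = a.
    rewrite /rt gux1 gxx1 sqrtr_sqr ger0_norm ?mulr_ge0 ?ltW // -/p.
    by field; rewrite !gt_eqF.
  have ang2 : ip_angle g2 u x = t.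
    by apply: H => //; apply/(angle_eq hg1 nu xnz ht).
  have r2 : rt g2 u x = a := (angle_eq hg2 nu xnz ht).1 ang2.
  have sa := sq_pos hg2 nu; have sx := sq_pos hg2 xnz.
  have e : g2 u x = a * (Num.sqrt (g2 u u) * Num.sqrt (g2 x x)).
    by rewrite -r2 /rt divfK // mulf_neq0 // gt_eqF.
  have e2 : g2 u x ^+ 2 = a ^+ 2 * g2 u u * g2 x x.
    by rewrite e !exprMn !sqr_sqrtr ?(gge0 hg2) // mulrA.
  move: e2; rewrite /x !(gDl hg2, gDr hg2, gZl hg2, gZr hg2) (gsym hg2 w u).
  move/eqP; rewrite -subr_eq0 => /eqP e3.
  apply/eqP; rewrite -subr_eq0; apply/eqP; rewrite -e3; ring.
have hb : (b * p) ^+ 2 = b ^+ 2 * p ^+ 2 by rewrite exprMn.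
have hb' : (- (b * p)) ^+ 2 = b ^+ 2 * p ^+ 2 by rewrite sqrrN exprMn.
have E1 := claim _ hb; have E2 := claim _ hb'.
have al := gpos hg2 nu.
set al' := g2 u u in E1 E2 al.
set be := g2 u w in E1 E2 *.
set ga := g2 w w in E1 E2.
have D : a * be * (q * al' * p * b * (1 - a ^+ 2)) * 4 = 0.
  move/eqP: E1; rewrite -subr_eq0 => /eqP E1.
  move/eqP: E2; rewrite -subr_eq0 => /eqP E2.
  have := congr2 (fun x y => x - y) E1 E2; rewrite subrr => <-.
  ring.
have nz4 : (4 : R) != 0 by [].
move/eqP: D; rewrite -mulrA mulf_eq0 => /orP [D|]; last first.
  rewrite mulf_eq0 (negbTE nz4) orbF !mulf_eq0 !gt_eqF //.
move: D; rewrite mulf_eq0 => /orP [/eqP a0|/eqP //].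
move: E1; rewrite a0 => E1.
have : (b * p * be) ^+ 2 = 0.
  rewrite (_ : (b * p * be) ^+ 2 = (0 * q * al' + b * p * be) ^+ 2); last by ring.
  by rewrite E1; ring.
by move/eqP; rewrite sqrf_eq0 !mulf_eq0 (gt_eqF bp) (gt_eqF pp) /= => /eqP.
Qed.
End Two.
Arguments PA {R V}.
Arguments PB {R V}.
Arguments PC {R V}.
Arguments PD {R V}.
Arguments PE {R V}.
Arguments ED_half {R V g1 g2} hg1 hg2 {t}.

Lemma ED (R : realType) (V : vectType R) (g1 g2 : V -> V -> R)
  (hg1 : is_inner_prod g1) (hg2 : is_inner_prod g2) : PE g1 g2 -> PD g1 g2.
Proof.
move=> [t [ht H]] v w nv nw; split.
  by apply: (ED_half hg1 hg2 ht) => // v' w' nv' nw' /(H v' w' nv' nw').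
by apply: (ED_half hg2 hg1 ht) => // v' w' nv' nw' /(H v' w' nv' nw').
Qed.
Arguments AB {R V g1 g2}.
Arguments BA {R V g1 g2}.
Arguments AC {R V g1 g2}.
Arguments CD {R V g1 g2}.
Arguments DA {R V g1 g2}.
Arguments AE {R V g1 g2}.
Arguments ED {R V g1 g2}.
Theorem mainTheorem12 (R : realType) (M : Type) (V : M -> vectType R)
    (g1 g2 : forall p : M, V p -> V p -> R)
    (hg1 : forall p, is_inner_prod (g1 p)) (hg2 : forall p, is_inner_prod (g2 p)) :
  let C1 := exists h : M -> R, forall p, 0 < h p /\
              forall v w : V p, g2 p v w = h p * g1 p v w in
  let C2 := exists f : M -> R, forall p, 0 < f p /\
              forall v : V p, ip_norm (g1 p) v = f p * ip_norm (g2 p) v in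
  let C3 := forall p (v w : V p), v != 0 -> w != 0 ->
              ip_angle (g1 p) v w = ip_angle (g2 p) v w in
  let C4 := forall p (v w : V p), v != 0 -> w != 0 ->
              (g1 p v w = 0 <-> g2 p v w = 0) in
  let C5 := forall p, exists theta0 : R, 0 < theta0 < pi /\
              forall v w : V p, v != 0 -> w != 0 ->
                (ip_angle (g1 p) v w = theta0 <-> ip_angle (g2 p) v w = theta0) in
  [/\ C1 <-> C2, C1 <-> C3, C1 <-> C4 & C1 <-> C5].
Proof.
move=> C1 C2 C3 C4 C5.
have hA : C1 <-> forall p, PA (g1 p) (g2 p).
  split; first by case=> h H p; exists (h p).
  move=> H; have [h Hh] := @choice M R
    (fun p h => 0 < h /\ forall v w : V p, g2 p v w = h * g1 p v w) H.
  by exists h.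
have hB : C2 <-> forall p, PB (g1 p) (g2 p).
  split; first by case=> h H p; exists (h p).
  move=> H; have [h Hh] := @choice M R
    (fun p f => 0 < f /\ forall v : V p, ip_norm (g1 p) v = f * ip_norm (g2 p) v) H.
  by exists h.
have hC : C3 <-> forall p, PC (g1 p) (g2 p) by exact: iff_refl.
have hD : C4 <-> forall p, PD (g1 p) (g2 p) by exact: iff_refl.
have hE : C5 <-> forall p, PE (g1 p) (g2 p) by exact: iff_refl.
move: hA hB hC hD hE => [A1 A2] [B1 B2] [X1 X2] [D1 D2] [E1 E2].
split; split => H.
- apply: B2 => p; exact: AB (A1 H p).
- apply: A2 => p; exact: BA (hg1 p) (hg2 p) (B1 H p).
- apply: X2 => p; exact: AC (hg1 p) (A1 H p).
- apply: A2 => p; apply: (DA (hg1 p) (hg2 p)); apply: (CD (hg1 p) (hg2 p)); exact: (X1 H p).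
- apply: D2 => p; exact: CD (hg1 p) (hg2 p) (AC (hg1 p) (A1 H p)).
- apply: A2 => p; exact: DA (hg1 p) (hg2 p) (D1 H p).
- apply: E2 => p; exact: AE (hg1 p) (A1 H p).
- apply: A2 => p; apply: (DA (hg1 p) (hg2 p)); apply: (ED (hg1 p) (hg2 p)); exact: (E1 H p).
Qed.
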